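(* Let $j,j',j''\in[1\mathinner{.\,.}n]$ be such that $j,j''\in\mathsf{R}$, $j'\notin\mathsf{R}$, and $j<j'<j''$. Then $\mathrm{end}(j)\le j''+\tau-1$ and $j''-j\ge2\tau$.
   Context: $T\in[0\mathinner{.\,.}\sigma)^n$ with $2\le\sigma<n^{1/7}$; $\tau=\lfloor\mu\log_\sigma n\rfloor$ for a fixed positive constant $\mu<1/6$ with $\tau\ge1$. $\mathrm{per}(S)$ is the shortest period of $S$. $\mathsf{R}=\{i\in[1\mathinner{.\,.}n-3\tau+2]:\mathrm{per}(T[i\mathinner{.\,.}i+3\tau-2])\le\tau/3\}$. For $j\in\mathsf{R}$, $\mathrm{end}(j)=\min\{j'\ge j:j'\notin\mathsf{R}\}+3\tau-2$. *)

(* Defs.v *)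
From Stdlib Require Import Reals.
From mathcomp Require Import all_boot zify.
Set Implicit Arguments. Unset Strict Implicit. Unset Printing Implicit Defensive.

(* 1-based fragment T[i .. i+len-1] *)
Definition frag (T : seq nat) (i len : nat) : seq nat :=
  take len (drop i.-1 T).

Definition is_period (S : seq nat) (p : nat) : bool :=
  (0 < p) && [forall k : 'I_(size S), (k + p < size S) ==> (nth 0 S k == nth 0 S (k + p))].

Lemma is_period_exists (S : seq nat) : exists p, is_period S p.
Proof.
exists (size S).+1; apply/andP; split => //.
apply/forallP => k; apply/implyP => H; exfalso.
have H2 : size S < k + (size S).+1 by rewrite addnS ltnS leq_addl.
by have := ltn_trans H2 H; rewrite ltnn.
Qed.

Definition per (S : seq nat) : nat := ex_minn (is_period_exists S).

(* membership in R = {i in [1 .. n-3tau+2] : per(T[i .. i+3tau-2]) <= tau/3} *)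
Definition inR (T : seq nat) (n tau i : nat) : bool :=
  (1 <= i) && (i + 3 * tau <= n + 2) && (3 * per (frag T i (3 * tau - 1)) <= tau).

Lemma notR_exists (T : seq nat) (n tau j : nat) :
  exists j', (j <= j') && ~~ inR T n tau j'.
Proof.
exists (j + n + 3); apply/andP; split; first lia.
rewrite /inR negb_and; apply/orP; left; rewrite negb_and; apply/orP; right.
rewrite -ltnNge; lia.
Qed.

Definition endR (T : seq nat) (n tau j : nat) : nat :=
  ex_minn (notR_exists T n tau j) + (3 * tau - 2).

(* Main.v *)
Require Import Defs.
From Stdlib Require Import Reals.
From mathcomp Require Import all_boot zify.

Definition segper (t : nat -> nat) (a b p : nat) : Prop :=
  forall x, a <= x -> x + p < b -> t x = t (x + p).

Lemma size_frag (T : seq nat) i len : i.-1 + len <= size T -> size (frag T i len) = len.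
Proof. move=> H; rewrite /frag size_take size_drop; case: ltnP => //; lia. Qed.

Lemma nth_frag (T : seq nat) i len k : k < len ->
  nth 0 (frag T i len) k = nth 0 T (i.-1 + k).
Proof. move=> H; by rewrite /frag nth_take // nth_drop. Qed.

Lemma period_seg (T : seq nat) i len p : i.-1 + len <= size T ->
  is_period (frag T i len) p -> segper (fun x => nth 0 T x) (i.-1) (i.-1 + len) p.
Proof.
move=> Hs /andP [Hp /forallP H] x H1 H2.
have Hsz := @size_frag T i len Hs.
have Hk : x - i.-1 < size (frag T i len) by rewrite Hsz; lia.
have := H (Ordinal Hk) => /implyP /= H3.
have H4 : x - i.-1 + p < size (frag T i len) by rewrite Hsz; lia.
move/eqP: (H3 H4); rewrite !nth_frag; try lia.
have -> : i.-1 + (x - i.-1) = x by lia.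
by have -> : i.-1 + (x - i.-1 + p) = x + p by lia.
Qed.

Lemma seg_period (T : seq nat) i len p : i.-1 + len <= size T -> 0 < p ->
  segper (fun x => nth 0 T x) (i.-1) (i.-1 + len) p -> is_period (frag T i len) p.
Proof.
move=> Hs Hp H; apply/andP; split => //.
have Hsz := @size_frag T i len Hs.
apply/forallP => k; apply/implyP => Hk; apply/eqP.
have Hk0 := ltn_ord k.
move: Hk Hk0; move: (nat_of_ord k) => kk Hk Hk0.
have Hk1 : kk + p < len by rewrite -Hsz.
have Hk2 : kk < len by rewrite -Hsz.
rewrite !nth_frag // addnA; apply: H; lia.
Qed.

Lemma segper_sub t a b p a' b' : segper t a b p -> a <= a' -> b' <= b -> segper t a' b' p.
Proof. move=> H h1 h2 x h3 h4; apply: H; lia. Qed.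

Lemma segper_comb t a b c d p q : segper t a b p -> segper t c d q ->
  0 < q -> a <= c -> c + p + q <= b -> b <= d -> segper t a d p.
Proof.
move=> Hp Hq h0 h1 h2 h3 x.
elim: x {-2}x (leqnn x) => [|N IH] x Hx hax hxd.
  case: (ltnP (x + p) b) => hb; first by apply: Hp.
  exfalso; lia.
case: (ltnP (x + p) b) => hb; first by apply: Hp.
have hy : c <= x - q by lia.
have E1 : x = (x - q) + q by lia.
have E2 : x + p = (x - q + p) + q by lia.
rewrite E2 {1}E1 -!Hq; try lia.
apply: IH; lia.
Qed.

Lemma per_period S : is_period S (per S).
Proof. rewrite /per; by case: ex_minnP. Qed.

Lemma per_min S p : is_period S p -> per S <= p.
Proof. rewrite /per; case: ex_minnP => m _ H; exact: H. Qed.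

Theorem lemma5p13 (mu : R) (n sigma tau : nat) (T : seq nat)
  (Hmu : Rlt 0 mu /\ Rlt mu (Rdiv 1 6))
  (HT : size T = n) (HTs : all (fun c => c < sigma) T)
  (Hsig2 : 2 <= sigma)
  (Hsign : Rlt (INR sigma) (Rpower (INR n) (Rdiv 1 7)))
  (Htau : Rle (INR tau) (Rmult mu (Rdiv (ln (INR n)) (ln (INR sigma)))) /\
          Rlt (Rmult mu (Rdiv (ln (INR n)) (ln (INR sigma)))) (Rplus (INR tau) 1))
  (Htau1 : 1 <= tau)
  (j j' j'' : nat)
  (Hj : 1 <= j <= n) (Hj' : 1 <= j' <= n) (Hj'' : 1 <= j'' <= n)
  (HjR : inR T n tau j) (Hj''R : inR T n tau j'') (Hj'R : ~~ inR T n tau j')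
  (Hlt : j < j' < j'') :
  endR T n tau j <= j'' + tau - 1 /\ 2 * tau <= j'' - j.
Proof.
rewrite /endR; case: ex_minnP => m /andP [hjm hm] hmin.
have hmj' : m <= j' by apply: hmin; rewrite Hj'R; lia.
have hmj : j < m.
  rewrite ltn_neqAle hjm andbT; apply/eqP => E; subst m; by rewrite HjR in hm.
have hm1 : inR T n tau m.-1.
  apply/negPn/negP => H; have := hmin m.-1; rewrite H; move=> /(_ _)/=.
  have -> : j <= m.-1 by lia. move=> /(_ isT); lia.
suff H : m + (3 * tau - 2) <= j'' + tau - 1 by lia.
case: (leqP (m + (3 * tau - 2)) (j'' + tau - 1)) => // Hc; exfalso.
move/negP: hm; apply.
move: hm1 Hj''R; rewrite /inR => /andP [/andP [a1 a2] a3] /andP [/andP [b1 b2] b3].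
have -> : 1 <= m by lia.
have -> /= : m + 3 * tau <= n + 2 by lia.
set p := per (frag T m.-1 (3 * tau - 1)) in a3.
set q := per (frag T j'' (3 * tau - 1)) in b3.
have Pp := per_period (frag T m.-1 (3 * tau - 1)). rewrite -/p in Pp.
have Pq := per_period (frag T j'' (3 * tau - 1)). rewrite -/q in Pq.
have hp0 : 0 < p by case/andP: Pp.
have hq0 : 0 < q by case/andP: Pq.
have Sp' := @period_seg T m.-1 (3 * tau - 1) p ltac:(lia) Pp.
have Sq' := @period_seg T j'' (3 * tau - 1) q ltac:(lia) Pq.
have C := @segper_comb _ _ _ _ _ _ _ Sp' Sq' hq0.
have C' : segper (fun x => nth 0 T x) (m.-1.-1) (j''.-1 + (3 * tau - 1)) p.
  apply: C; lia.
have Hper : is_period (frag T m (3 * tau - 1)) p.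
  apply: seg_period => //; first lia.
  apply: (@segper_sub _ _ _ _ _ _ C'); lia.
have := @per_min _ _ Hper; lia.
Qed.
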